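(* Let $X$ be a real random variable with finite cumulative information generating function (CIGF), and let $Y=\gamma X+\delta$ with $\gamma\in\mathbb{R}\setminus\{0\}$ and $\delta\in\mathbb{R}$. Then $$G_Y(\alpha,\beta)=\begin{cases}\gamma\,G_X(\alpha,\beta), & 0<\gamma<\infty,\\ |\gamma|\,G_X(\beta,\alpha), & -\infty<\gamma<0,\end{cases}$$ for $(\alpha,\beta)\in D_X$ if $0<\gamma<\infty$, and for $(\beta,\alpha)\in D_X$ if $-\infty<\gamma<0$.
   Context: For a random variable $X$ with CDF $F(x)=\mathbb{P}(X\le x)$ and survival function $\overline F(x)=1-F(x)$, let $l=\inf\{x\in\mathbb{R}:F(x)>0\}$ and $r=\sup\{x\in\mathbb{R}:\overline F(x)>0\}$ (possibly infinite). The cumulative information generating function (CIGF) of $X$ is $G_X(\alpha,\beta)=\int_l^r [F(x)]^\alpha[\overline F(x)]^\beta\,dx$, defined on $D_X=\{(\alpha,\beta)\in\mathbb{R}^2: G_X(\alpha,\beta)<+\infty\}$. *)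

(* Defs.v *)
From HB Require Import structures.
From mathcomp Require Import all_boot all_order all_algebra.
From mathcomp Require Import all_classical all_reals all_analysis.
Set Implicit Arguments. Unset Strict Implicit. Unset Printing Implicit Defensive.
Import Order.TTheory GRing.Theory Num.Theory.
Local Open Scope classical_set_scope.
Local Open Scope ring_scope.

Section cigf.
Context d {T : measurableType d} {R : realType} (P : probability T R).

Definition cdfR (X : {RV P >-> R}) (x : R) : R := fine (cdf X x).

Definition survR (X : {RV P >-> R}) (x : R) : R := 1 - cdfR X x.

Definition supp_l (X : {RV P >-> R}) : \bar R :=
  ereal_inf [set x%:E | x in [set x : R | 0 < cdfR X x]].
Definition supp_r (X : {RV P >-> R}) : \bar R :=
  ereal_sup [set x%:E | x in [set x : R | 0 < survR X x]].

Definition CIGF (X : {RV P >-> R}) (a b : R) : \bar R :=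
  (\int[lebesgue_measure]_(x in [set x : R | (supp_l X < x%:E)%E /\ (x%:E < supp_r X)%E])
     ((cdfR X x) `^ a * (survR X x) `^ b)%:E)%E.

Definition CIGF_dom (X : {RV P >-> R}) : set (R * R) :=
  [set ab | (CIGF X ab.1 ab.2 < +oo)%E].
End cigf.

(* Main.v *)
Require Import Defs.
From HB Require Import structures.
From mathcomp Require Import all_boot all_order all_algebra.
From mathcomp Require Import all_classical all_reals all_analysis.
From mathcomp Require Import ring lra measurable_realfun.
Import Order.TTheory GRing.Theory Num.Theory.
Local Open Scope classical_set_scope.
Local Open Scope ring_scope.

Lemma inf_ltP (R : realType) (S : set R) y :
  (ereal_inf [set x%:E | x in S] < y%:E)%E <-> exists2 z, S z & z < y.
Proof.
split.
- by move=> /ereal_inf_lt [_ [z Sz <-]]; rewrite lte_fin => zy; exists z.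
- move=> [z Sz zy]; apply: (@le_lt_trans _ _ z%:E); last by rewrite lte_fin.
  by apply: ereal_inf_lbound; exists z.
Qed.

Lemma sup_gtP (R : realType) (S : set R) y :
  (y%:E < ereal_sup [set x%:E | x in S])%E <-> exists2 z, S z & y < z.
Proof.
split.
- by move=> /ereal_sup_gt [_ [z Sz <-]]; rewrite lte_fin => zy; exists z.
- move=> [z Sz zy]; apply: (@lt_le_trans _ _ z%:E); first by rewrite lte_fin.
  by apply: ereal_sup_ubound; exists z.
Qed.
Section cov.
Variable R : realType.
Variables (g d : R).
Hypothesis g0 : g != 0.
Definition haff (y : R) : R := g^-1 * (y - d).
Lemma haffE y : y = g * haff y + d.
Proof. by rewrite /haff mulrA mulfV // mul1r subrK. Qed.

Lemma haff_preimage_oc (a b : R) :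
  haff @^-1` `]a, b] = if 0 < g then `]g * a + d, g * b + d]%classic else `[g * b + d, g * a + d[%classic.
Proof.
have gn : 0 < g \/ g < 0 by case: (ltrgt0P g) g0 => // *; [left|right].
apply/seteqP; split => y /=; have := haffE y; set t := haff y => ey;
  case: ifPn => gp; rewrite !in_itv /=; move=> /andP[ay yb]; apply/andP; split;
  move: ay yb; rewrite ?bnd_simp => ay yb; case: gn => gn; try (exfalso; lra).
- nra.
- nra.
- nra.
- nra.
- by rewrite -(ltr_pM2l gn); nra.
- by rewrite -(ler_pM2l gn); nra.
- by rewrite -(ltr_nM2l gn); nra.
- by rewrite -(ler_nM2l gn); nra.
Qed.

Lemma measurable_haff : measurable_fun [set: R] haff.
Proof.
apply: measurableT_comp; first exact: measurable_realfun.mulrl_measurable.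
apply: measurable_realfun.measurable_funD => //; exact: measurable_cst.
Qed.

Lemma lebesgue_haff (A : set R) : measurable A ->
  lebesgue_measure (haff @^-1` A) = (`|g|%:E * lebesgue_measure A)%E.
Proof.
move=> mA.
have k0 : 0 <= `|g|^-1 by rewrite invr_ge0.
pose k := NngNum k0.
have gpos : 0 < `|g| by rewrite normr_gt0.
pose pf := (pushforward (@lebesgue_measure R) (haff : _ -> measurableTypeR R) : {measure set _ -> \bar R}).
have mh : measurable_fun [set: R] (haff : _ -> measurableTypeR R) by exact: measurable_haff.
pose mu := mscale k (pf mh).
have := @lebesgue_measure_unique R mu.
move=> /(_ _ A mA) -> /=; last first.
  move=> _ [[a b] _ <-] /=.
  rewrite /mu /mscale /= /pushforward haff_preimage_oc.
  case: ifPn => gp; rewrite !lebesgue_measure_itv /=.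
  + rewrite !lte_fin ltrD2r ltr_pM2l // gtr0_norm //.
    case: ifPn => _; last by rewrite mule0.
    rewrite -!EFinD -EFinM; congr EFin; field; exact: lt0r_neq0.
  + have gn : g < 0 by rewrite lt_neqAle g0 leNgt.
    rewrite !lte_fin ltrD2r ltr_nM2l // ltr0_norm //.
    case: ifPn => _; last by rewrite mule0.
    rewrite -!EFinD -EFinM; congr EFin; field; exact: ltr0_neq0.
rewrite /mu /mscale /= /pushforward /= muleA -EFinM mulfV ?mul1e //.
by rewrite normr_eq0.
Qed.


Lemma integral_haff (D : set R) (f : R -> \bar R) : measurable D ->
  measurable_fun D f -> (forall x, D x -> (0 <= f x)%E) ->
  (\int[lebesgue_measure]_(y in haff @^-1` D) f (haff y) =
   `|g|%:E * \int[lebesgue_measure]_(x in D) f x)%E.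
Proof.
move=> mD mf f0.
have k0 : 0 <= `|g| by [].
pose k := NngNum k0.
have -> : (\int[lebesgue_measure]_(y in haff @^-1` D) f (haff y) =
   \int[lebesgue_measure]_(y in haff @^-1` D) (f \o haff) y)%E by [].
rewrite -(@ge0_integral_pushforward _ _ (measurableTypeR R) (measurableTypeR R) R haff measurable_haff lebesgue_measure D f mD mf); last by move=> x /set_mem; apply: f0.
rewrite (eq_measure_integral (mscale k lebesgue_measure)); last first.
  - move=> mh A mA _; rewrite /pushforward /=.
    exact: lebesgue_haff.
  - exact: measurable_haff.
apply: ge0_integral_mscale => //.
Qed.
End cov.
Arguments haff {R}.
Arguments haffE {R g d}.
Arguments haff_preimage_oc {R g d}.
Arguments measurable_haff {R}.
Arguments lebesgue_haff {R g d}.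
Arguments integral_haff {R g d}.

Section prob.
Context d {T : measurableType d} {R : realType} (P : probability T R).
Local Notation pr A := (fine (P A)).

Lemma pr_ge0 (A : set T) : 0 <= pr A.
Proof. exact/fine_ge0/measure_ge0. Qed.

Lemma pr_le1 (A : set T) : measurable A -> pr A <= 1.
Proof.
move=> mA; have := probability_le1 P mA.
by rewrite -[P A]fineK ?fin_num_measure // lee_fin.
Qed.

Lemma pr_le (A B : set T) : measurable A -> measurable B -> A `<=` B -> pr A <= pr B.
Proof.
by move=> mA mB AB; rewrite fine_le ?fin_num_measure // le_measure // inE.
Qed.

Lemma prC (A : set T) : measurable A -> pr (~` A) = 1 - pr A.
Proof.
by move=> mA; rewrite probability_setC // -[P A]fineK ?fin_num_measure // -EFinB.
Qed.

Lemma prU (A B : set T) : measurable A -> measurable B -> A `&` B = set0 ->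
  pr (A `|` B) = pr A + pr B.
Proof.
by move=> mA mB AB; rewrite measureU // fineD ?fin_num_measure.
Qed.

Variable X : {RV P >-> R}.
Definition cdfL (x : R) : R := pr [set t | X t < x].

Lemma mlt (x : R) : measurable [set t | X t < x].
Proof.
have -> : [set t | X t < x] = X @^-1` `]-oo, x[ by apply/seteqP; split => t /=; rewrite in_itv.
exact: measurable_funPTI.
Qed.

Lemma mle (x : R) : measurable [set t | X t <= x].
Proof.
have -> : [set t | X t <= x] = X @^-1` `]-oo, x] by apply/seteqP; split => t /=; rewrite in_itv.
exact: measurable_funPTI.
Qed.

Lemma cdfRE (x : R) : cdfR X x = pr [set t | X t <= x].
Proof.
by rewrite /cdfR /cdf /distribution /pushforward; congr (fine (P _)).
Qed.

Lemma cdfL_le x : cdfL x <= cdfR X x.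
Proof. rewrite cdfRE; apply: pr_le; [exact: mlt|exact: mle|move=> t /= /ltW //]. Qed.

Lemma cdfR_leL x y : x < y -> cdfR X x <= cdfL y.
Proof. move=> xy; rewrite cdfRE; apply: pr_le; [exact: mle|exact: mlt|move=> t /= /le_lt_trans; exact]. Qed.

Lemma cdfR_nd : {homo cdfR X : n m / n <= m}.
Proof. move=> x y xy; rewrite !cdfRE; apply: pr_le; [exact: mle|exact: mle|move=> t /= /le_trans; exact]. Qed.

Lemma cdfL_nd : {homo cdfL : n m / n <= m}.
Proof. move=> x y xy; apply: pr_le; [exact: mlt|exact: mlt|move=> t /= /lt_le_trans; exact]. Qed.

Lemma cdfR_ge0 x : 0 <= cdfR X x. Proof. by rewrite cdfRE pr_ge0. Qed.
Lemma cdfR_le1 x : cdfR X x <= 1. Proof. by rewrite cdfRE; apply: pr_le1; exact: mle. Qed.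
Lemma cdfL_ge0 x : 0 <= cdfL x. Proof. by rewrite pr_ge0. Qed.
Lemma cdfL_le1 x : cdfL x <= 1. Proof. by apply: pr_le1; exact: mlt. Qed.

Lemma cdfL_pmf x : pmf X x = 0 -> cdfL x = cdfR X x.
Proof.
move=> px; rewrite cdfRE.
have -> : [set t | X t <= x] = [set t | X t < x] `|` X @^-1` [set x].
  apply/seteqP; split => t /=; first by rewrite le_eqVlt => /orP[/eqP ->|]; [right|left].
  by case=> [/ltW|->].
rewrite prU //; last first.
- by apply/seteqP; split => t // [] /= + xe; rewrite xe ltxx.
- exact: mlt.
- by move: px; rewrite /pmf => ->; rewrite addr0.
Qed.
End prob.
Arguments cdfL {d T R P}.
Arguments mlt {d T R P}.
Arguments mle {d T R P}.
Arguments cdfRE {d T R P}.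
Arguments cdfL_le {d T R P}.
Arguments cdfR_leL {d T R P}.
Arguments cdfR_nd {d T R P}.
Arguments cdfL_nd {d T R P}.
Arguments cdfR_ge0 {d T R P}.
Arguments cdfR_le1 {d T R P}.
Arguments cdfL_ge0 {d T R P}.
Arguments cdfL_le1 {d T R P}.
Arguments cdfL_pmf {d T R P}.
Arguments pr_ge0 {d T R}.
Arguments pr_le1 {d T R}.
Arguments pr_le {d T R}.
Arguments prC {d T R}.
Arguments prU {d T R}.


Section main.
Context d (T : measurableType d) (R : realType) (P : probability T R)
  (X Y : {RV P >-> R}) (g e : R).
Hypothesis g0 : g != 0.
Hypothesis hY : forall t, Y t = g * X t + e.
Local Notation h := (haff g e).

Lemma haff_inv w : h (g * w + e) = w.
Proof. by rewrite /haff addrK mulrA mulVf // mul1r. Qed.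

Lemma haff_lt_pos : 0 < g -> forall z y, (h z < h y) = (z < y).
Proof. by move=> gp z y; rewrite /haff ltr_pM2l ?invr_gt0 // ltrD2r. Qed.

Lemma haff_lt_neg : g < 0 -> forall z y, (h z < h y) = (y < z).
Proof. by move=> gp z y; rewrite /haff ltr_nM2l ?invr_lt0 // ltrD2r. Qed.

Lemma cdfY_pos : 0 < g -> forall y, cdfR Y y = cdfR X (h y).
Proof.
move=> gp y; rewrite !cdfRE.
have E t : (Y t <= y) = (X t <= h y).
  by rewrite hY [in Z in (_ <= Z)](@haffE _ g e g0 y) lerD2r ler_pM2l.
by congr (fine (P _)); apply/seteqP; split => t /=; rewrite E.
Qed.

Lemma cdfY_neg : g < 0 -> forall y, cdfR Y y = 1 - cdfL X (h y).
Proof.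
move=> gn y; rewrite !cdfRE.
have E t : (Y t <= y) = ~~ (X t < h y).
  by rewrite hY [in Z in (_ <= Z)](@haffE _ g e g0 y) lerD2r ler_nM2l // leNgt.
rewrite -prC; last exact: mlt.
by congr (fine (P _)); apply/seteqP; split => t /=; rewrite E => /negP.
Qed.

Local Notation I Z := [set x : R | (supp_l Z < x%:E)%E /\ (x%:E < supp_r Z)%E].

Lemma IY_pos : 0 < g -> I Y = h @^-1` I X.
Proof.
move=> gp; apply/seteqP; split => y /=; rewrite /supp_l /supp_r.
- move=> [/inf_ltP [z /= z0 zy] /sup_gtP [w /= w0 yw]]; split.
  + by apply/inf_ltP; exists (h z); [rewrite /= -cdfY_pos | rewrite haff_lt_pos].
  + by apply/sup_gtP; exists (h w); [rewrite /= /survR -cdfY_pos | rewrite haff_lt_pos].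
- move=> [/inf_ltP [z /= z0 zy] /sup_gtP [w /= w0 yw]]; split.
  + apply/inf_ltP; exists (g * z + e); first by rewrite /= cdfY_pos // haff_inv.
    by rewrite -(haff_lt_pos gp) haff_inv.
  + apply/sup_gtP; exists (g * w + e); first by rewrite /= /survR cdfY_pos // haff_inv.
    by rewrite -(haff_lt_pos gp) haff_inv.
Qed.

Lemma IY_neg : g < 0 -> I Y = h @^-1` I X.
Proof.
move=> gn; apply/seteqP; split => y /=; rewrite /supp_l /supp_r.
- move=> [/inf_ltP [z /= z0 zy] /sup_gtP [w /= w0 yw]]; split.
  + apply/inf_ltP; exists (h w); last by rewrite haff_lt_neg.
    move: w0; rewrite /= /survR cdfY_neg // => w0.
    have := cdfL_le X (h w); lra.
  + apply/sup_gtP; exists ((h y + h z) / 2).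
      move: z0; rewrite /= /survR cdfY_neg // => z0.
      have hz : h y < h z by rewrite haff_lt_neg.
      have hm : (h y + h z) / 2 < h z by lra.
      have := cdfR_leL X _ _ hm; lra.
    have hz : h y < h z by rewrite haff_lt_neg.
    lra.
- move=> [/inf_ltP [a /= a0 ay] /sup_gtP [b /= b0 yb]]; split.
  + apply/inf_ltP; exists (g * b + e).
      rewrite /= cdfY_neg // haff_inv.
      move: b0; rewrite /survR => b0; have := cdfL_le X b; lra.
    by rewrite -(haff_lt_neg gn) haff_inv.
  + apply/sup_gtP; exists (g * ((a + h y) / 2) + e).
      rewrite /= /survR cdfY_neg // haff_inv.
      have hm : a < (a + h y) / 2 by lra.
      have := cdfR_leL X _ _ hm; lra.
    by rewrite -(haff_lt_neg gn) haff_inv; lra.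
Qed.

End main.

Local Notation I Z := [set x : _ | (supp_l Z < x%:E)%E /\ (x%:E < supp_r Z)%E].

Lemma mI d (T : measurableType d) (R : realType) (P : probability T R) (Z : {RV P >-> R}) :
  measurable (I Z).
Proof.
apply: is_interval_measurable => x y [lx _] [_ ry] z /andP[xz zy]; split.
- by apply: (lt_le_trans lx); rewrite lee_fin.
- by apply: (le_lt_trans _ ry); rewrite lee_fin.
Qed.

Lemma mpow (R : realType) (f : R -> R) (a b : R) :
  measurable_fun [set: R] f ->
  measurable_fun [set: R] (fun x => (f x `^ a * (1 - f x) `^ b)%:E).
Proof.
move=> mf; apply/measurable_EFinP.
apply: (@measurable_funM _ _ _ _ (fun x => f x `^ a) (fun x => (1 - f x) `^ b)).
- exact: measurableT_comp (measurable_powR _) mf.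
- apply: measurableT_comp (measurable_powR _) _.
  exact: (@measurable_funB _ _ _ _ (fun=> 1) f) (measurable_cst _) mf.
Qed.

Theorem theorem1 (d : measure_display) (T : measurableType d) (R : realType)
  (P : probability T R) (X Y : {RV P >-> R}) (gamma delta : R)
  (hgamma : gamma != 0) (hY : forall t, Y t = gamma * X t + delta) :
  (0 < gamma -> forall alpha beta : R, (alpha, beta) \in CIGF_dom X ->
     CIGF Y alpha beta = (gamma%:E * CIGF X alpha beta)%E) /\
  (gamma < 0 -> forall alpha beta : R, (beta, alpha) \in CIGF_dom X ->
     CIGF Y alpha beta = (`|gamma|%:E * CIGF X beta alpha)%E).
Proof.
split => [gp a b _ | gn a b _].
- rewrite /CIGF (@IY_pos _ _ _ _ X Y gamma delta hgamma hY gp).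
  pose f := (fun x => (cdfR X x `^ a * survR X x `^ b)%:E).
  transitivity (\int[lebesgue_measure]_(y in haff gamma delta @^-1` I X)
    f (haff gamma delta y))%E.
    apply: eq_integral => y _.
    by rewrite /f /survR (@cdfY_pos _ _ _ _ X Y gamma delta hgamma hY gp).
  rewrite (integral_haff hgamma (I X) f) ?gtr0_norm //.
  + exact: mI.
  + apply: measurable_funTS; rewrite /f /survR; apply: mpow; exact: (nondecreasing_measurable measurableT (cdfR_nd X)).
  + by move=> x _; rewrite lee_fin mulr_ge0 // powR_ge0.
- rewrite /CIGF (@IY_neg _ _ _ _ X Y gamma delta hgamma hY gn).
  pose f := (fun x => ((1 - cdfL X x) `^ a * (1 - (1 - cdfL X x)) `^ b)%:E).
  transitivity (\int[lebesgue_measure]_(y in haff gamma delta @^-1` I X)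
    f (haff gamma delta y))%E.
    apply: eq_integral => y _.
    by rewrite /f /survR (@cdfY_neg _ _ _ _ X Y gamma delta hgamma hY gn).
  rewrite (integral_haff hgamma (I X) f); last 3 first.
  + exact: mI.
  + apply: measurable_funTS; apply: (@mpow _ (fun x => 1 - cdfL X x)).
    apply: (@measurable_funB _ _ _ _ (fun=> 1) (cdfL X)); first exact: measurable_cst.
    exact: (nondecreasing_measurable measurableT (cdfL_nd X)).
  + by move=> x _; rewrite lee_fin mulr_ge0 // powR_ge0.
  congr (_ * _)%E.
  apply: ge0_ae_eq_integral.
  + exact: mI.
  + apply: measurable_funTS; apply: (@mpow _ (fun x => 1 - cdfL X x)).
    apply: (@measurable_funB _ _ _ _ (fun=> 1) (cdfL X)); first exact: measurable_cst.
    exact: (nondecreasing_measurable measurableT (cdfL_nd X)).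
  + apply: measurable_funTS; rewrite /survR; apply: mpow; exact: (nondecreasing_measurable measurableT (cdfR_nd X)).
  + by move=> x _; rewrite lee_fin mulr_ge0 // powR_ge0.
  + by move=> x _; rewrite lee_fin mulr_ge0 // powR_ge0.
  + exists [set r | 0 < pmf X r]; split.
    * exact: countable_measurable (pmf_gt0_countable X).
    * exact: countable_lebesgue_measure0 (pmf_gt0_countable X).
    * move=> x /= H; apply/negP => /negP; rewrite lt_neqAle pmf_ge0 andbT negbK eq_sym.
      move=> /eqP /cdfL_pmf E; apply: H => _.
      rewrite /f E /survR.
      have -> : 1 - (1 - cdfR X x) = cdfR X x by ring.
      by rewrite mulrC.
Qed.
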